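(* Let $p$ be a positive integer, $r\ge2$ an integer, $s=p+2r$, and $M=(m_{ij})\in\mathfrak{so}(r,\mathbb{C})$. Let $S$ be the $(r-1)\times r$ matrix $S=\big(I_{r-1}\mid m\big)$ whose last column is $m=(m_{1r},\dots,m_{r-1,r})^t$. Define $\hat\Phi^*:V^*_{ps}(\mathbb{R})\to\mathbb{C}^{(r-1)\times p}$ by $\hat\Phi^*(X)=S(W+M\bar W)Z^{-1}$, where for $X=(X_0;X_1;X_2;X_3)$ (blocks of $p,p,r,r$ rows) $Z=X_0+iX_1$ and $W=X_2+iX_3$. Then $\hat\Phi^*$ is independent of the last row of $X$, thus inducing a map $\Phi^*:V^*_{p,s-1}(\mathbb{R})\to\mathbb{C}^{(r-1)\times p}$, and the complex valued components of $\Phi^*$ form an orthogonal harmonic family of $\mathbf{GL}_p(\mathbb{R})$-invariant functions on $V^*_{p,s-1}(\mathbb{R})$, equipped with the Euclidean metric.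
   Context: $\mathfrak{so}(r,\mathbb{C})$ is the set of complex skew-symmetric $r\times r$ matrices. For $n\ge p$, $U^*_{pn}(\mathbb{R})=\{X\in\mathbb{R}^{(p+n)\times p}: X^tX\text{ invertible}\}$ and $V^*_{pn}(\mathbb{R})=\{X\in U^*_{pn}(\mathbb{R}): \det(X_0+iX_1)\neq0\}$, where $X_0,X_1$ are the first and second blocks of $p$ rows; $V^*_{p,s-1}(\mathbb{R})$ is identified with matrices obtained from elements of $V^*_{ps}(\mathbb{R})$ by deleting the last row. $\mathbf{GL}_p(\mathbb{R})$ acts by right multiplication. The Euclidean metric is $\langle X,Y\rangle=\mathrm{trace}(X^tY)$. For a Riemannian manifold $(M,g)$ and complex functions $\phi,\psi$, $\tau(\phi)$ is the Laplace–Beltrami operator (extended complex-linearly) and $\kappa(\phi,\psi)=g(\mathrm{grad}\,\phi,\mathrm{grad}\,\psi)$ with $g$ extended complex-bilinearly. A set $\Omega$ of complex functions is an orthogonal harmonic family if $\tau(\phi)=0$ and $\kappa(\phi,\psi)=0$ for all $\phi,\psi\in\Omega$. *)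

(* Defs.v *)
From HB Require Import structures.
From mathcomp Require Import all_boot all_order all_algebra.
From mathcomp Require Import all_classical all_reals all_analysis.
From mathcomp Require Import complex.

Set Implicit Arguments.
Unset Strict Implicit.
Unset Printing Implicit Defensive.

Import Order.TTheory GRing.Theory Num.Theory.
Import numFieldNormedType.Exports.
Local Open Scope ring_scope.

Section Defs.
Variable R : realType.

(* Elements X of R^{(p+s) x p} with s = p + 2r, written in blocks of
   p, p, r, r rows:  X = (X0; X1; X2; X3). *)
Definition blk0 p r (X : 'M[R]_(p + p + r + r, p)) : 'M[R]_(p, p) :=
  usubmx (usubmx (usubmx X)).
Definition blk1 p r (X : 'M[R]_(p + p + r + r, p)) : 'M[R]_(p, p) :=
  dsubmx (usubmx (usubmx X)).
Definition blk2 p r (X : 'M[R]_(p + p + r + r, p)) : 'M[R]_(r, p) :=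
  dsubmx (usubmx X).
Definition blk3 p r (X : 'M[R]_(p + p + r + r, p)) : 'M[R]_(r, p) :=
  dsubmx X.

Definition cplx m n (A B : 'M[R]_(m, n)) : 'M[R[i]]_(m, n) :=
  \matrix_(a, b) (A a b +i* B a b)%C.

Definition conjmx m n (A : 'M[R[i]]_(m, n)) : 'M[R[i]]_(m, n) :=
  map_mx (@conjc R) A.

Definition Zof p r (X : 'M[R]_(p + p + r + r, p)) := cplx (blk0 X) (blk1 X).
Definition Wof p r (X : 'M[R]_(p + p + r + r, p)) := cplx (blk2 X) (blk3 X).

Definition inU m p (X : 'M[R]_(m, p)) : Prop := (X^T *m X) \in unitmx.

Definition inV p r (X : 'M[R]_(p + p + r + r, p)) : Prop :=
  inU X /\ \det (Zof X) != 0.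

Lemma droplast_le p r : (p + p + r + r.-1 <= p + p + r + r)%N.
Proof. by rewrite leq_add2l leq_pred. Qed.

Definition droplast p r (X : 'M[R]_(p + p + r + r, p))
  : 'M[R]_(p + p + r + r.-1, p) :=
  \matrix_(a, b) X (widen_ord (@droplast_le p r) a) b.

Definition inV' p r (Y : 'M[R]_(p + p + r + r.-1, p)) : Prop :=
  exists X : 'M[R]_(p + p + r + r, p), inV X /\ droplast X = Y.

Definition skew_cplx r (M : 'M[R[i]]_r) : Prop := M^T = - M.

(* S = (I_{r-1} | m),  m = (m_{1r}, ..., m_{r-1,r})^t *)
Definition Smx r (M : 'M[R[i]]_r) : 'M[R[i]]_(r.-1, r) :=
  \matrix_(a, b)
    (if nat_of_ord b == nat_of_ord a then 1
     else if nat_of_ord b == r.-1 then M (widen_ord (leq_pred r) a) b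
     else 0).

Definition hatPhi p r (M : 'M[R[i]]_r) (X : 'M[R]_(p + p + r + r, p))
  : 'M[R[i]]_(r.-1, p) :=
  Smx M *m (Wof X + M *m conjmx (Wof X)) *m invmx (Zof X).

Definition rpartial n p (a : 'I_n) (b : 'I_p) (F : 'M[R]_(n, p) -> R)
  : 'M[R]_(n, p) -> R :=
  fun Y => derive F Y (delta_mx a b).

(* complex-valued functions: derivatives extended complex-linearly *)
Definition cRe n p (f : 'M[R]_(n, p) -> R[i]) : 'M[R]_(n, p) -> R :=
  fun Y => complex.Re (f Y).
Definition cIm n p (f : 'M[R]_(n, p) -> R[i]) : 'M[R]_(n, p) -> R :=
  fun Y => complex.Im (f Y).

Definition cpartial n p (a : 'I_n) (b : 'I_p) (f : 'M[R]_(n, p) -> R[i])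
  : 'M[R]_(n, p) -> R[i] :=
  fun Y => (rpartial a b (cRe f) Y +i* rpartial a b (cIm f) Y)%C.

Definition C2_at n p (f : 'M[R]_(n, p) -> R[i]) (Y : 'M[R]_(n, p)) : Prop :=
  forall (a : 'I_n) (b : 'I_p),
    [/\ derivable (cRe f) Y (delta_mx a b), derivable (cIm f) Y (delta_mx a b),
        derivable (rpartial a b (cRe f)) Y (delta_mx a b) &
        derivable (rpartial a b (cIm f)) Y (delta_mx a b)].

Definition tau n p (f : 'M[R]_(n, p) -> R[i]) (Y : 'M[R]_(n, p)) : R[i] :=
  \sum_(a < n) \sum_(b < p) cpartial a b (cpartial a b f) Y.

Definition kappa n p (f g : 'M[R]_(n, p) -> R[i]) (Y : 'M[R]_(n, p)) : R[i] :=
  \sum_(a < n) \sum_(b < p) cpartial a b f Y * cpartial a b g Y.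

Definition orthogonal_harmonic_family n p (I : Type)
  (Omega : I -> 'M[R]_(n, p) -> R[i]) (D : 'M[R]_(n, p) -> Prop) : Prop :=
  forall Y, D Y ->
    (forall i, C2_at (Omega i) Y /\ tau (Omega i) Y = 0) /\
    (forall i j, kappa (Omega i) (Omega j) Y = 0).

Definition GL_invariant n p (f : 'M[R]_(n, p) -> R[i])
  (D : 'M[R]_(n, p) -> Prop) : Prop :=
  forall Y (g : 'M[R]_p), D Y -> g \in unitmx -> f (Y *m g) = f Y.

End Defs.

(* Main.v *)
Require Import Defs.
From HB Require Import structures.
From mathcomp Require Import all_boot all_order all_algebra.
From mathcomp Require Import all_classical all_reals all_analysis.
From mathcomp Require Import complex.
From mathcomp Require Import ring lra.
From mathcomp Require Import zify.

Set Implicit Arguments.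
Unset Strict Implicit.
Unset Printing Implicit Defensive.
Import Order.TTheory GRing.Theory Num.Theory.
Import numFieldNormedType.Exports.
Local Open Scope ring_scope.
Local Open Scope complex_scope.
Local Open Scope classical_set_scope.

Section CD.
Variable R : realType.
Local Notation Re := (@complex.Re R).
Local Notation Im := (@complex.Im R).

Lemma ReM (x y : R[i]) : Re (x * y) = Re x * Re y - Im x * Im y.
Proof. by case: x => a b; case: y => c d. Qed.
Lemma ImM (x y : R[i]) : Im (x * y) = Re x * Im y + Im x * Re y.
Proof. by case: x => a b; case: y => c d. Qed.
Lemma ReD (x y : R[i]) : Re (x + y) = Re x + Re y.
Proof. by case: x => a b; case: y => c d. Qed.
Lemma ImD (x y : R[i]) : Im (x + y) = Im x + Im y.
Proof. by case: x => a b; case: y => c d. Qed.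
Lemma ReN (x : R[i]) : Re (- x) = - Re x.
Proof. by case: x => a b. Qed.
Lemma ImN (x : R[i]) : Im (- x) = - Im x.
Proof. by case: x => a b. Qed.
Lemma ReV (x : R[i]) : Re (x^-1) = Re x / (Re x ^+ 2 + Im x ^+ 2).
Proof. by case: x => a b. Qed.
Lemma ImV (x : R[i]) : Im (x^-1) = - Im x / (Re x ^+ 2 + Im x ^+ 2).
Proof. case: x => a b /=. by rewrite mulNr. Qed.
Lemma ReC (x : R) : Re x%:C = x. Proof. by []. Qed.
Lemma ImC (x : R) : Im x%:C = 0. Proof. by []. Qed.
Lemma cplxE (z : R[i]) : (Re z +i* Im z)%C = z. Proof. by case: z. Qed.

Lemma complex_ext (x y : R[i]) : Re x = Re y -> Im x = Im y -> x = y.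
Proof. by case: x => a b; case: y => c d /= -> ->. Qed.

Definition CDer (phi : R -> R[i]) (t : R) (d : R[i]) : Prop :=
  is_derive t (1:R) (fun s => Re (phi s)) (Re d) /\
  is_derive t (1:R) (fun s => Im (phi s)) (Im d).

Lemma is_derive_ext (f g : R -> R) t d d' : (forall s, f s = g s) -> d = d' ->
  is_derive t (1:R) f d -> is_derive t (1:R) g d'.
Proof. by move=> fg <-; have -> : g = f by apply/funext => s; rewrite fg. Qed.

Lemma CDer_eq phi t d d' : d = d' -> CDer phi t d -> CDer phi t d'.
Proof. by move=> ->. Qed.

Lemma CDer_cst (c : R[i]) t : CDer (fun _ => c) t 0.
Proof.
by split; [apply: is_derive_ext (is_derive_cst (Re c) t (1:R)) |
  apply: is_derive_ext (is_derive_cst (Im c) t (1:R))].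
Qed.

Lemma is_derive_mulc (k : R) t : is_derive t (1:R) (fun s : R => k * s) k.
Proof.
have := is_deriveZ k (is_derive_id t (1:R)).
apply: is_derive_ext => [s|]; first by [].
by rewrite /GRing.scale /= mulr1.
Qed.

Lemma CDer_lin (w : R[i]) t : CDer (fun s => s%:C * w) t w.
Proof.
split.
  apply: is_derive_ext (is_derive_mulc (Re w) t) => [s|//].
  by rewrite ReM ReC ImC mul0r subr0 mulrC.
apply: is_derive_ext (is_derive_mulc (Im w) t) => [s|//].
by rewrite ImM ReC ImC mul0r addr0 mulrC.
Qed.

Lemma CDer_add phi psi t d e : CDer phi t d -> CDer psi t e ->
  CDer (fun s => phi s + psi s) t (d + e).
Proof.
move=> [h1 h2] [h3 h4]; split.
  apply: is_derive_ext (is_deriveD h1 h3) => [s|]; by rewrite ReD.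
apply: is_derive_ext (is_deriveD h2 h4) => [s|]; by rewrite ImD.
Qed.

Lemma CDer_opp phi t d : CDer phi t d -> CDer (fun s => - phi s) t (- d).
Proof.
move=> [h1 h2]; split.
  apply: is_derive_ext (is_deriveN h1) => [s|]; by rewrite ReN.
apply: is_derive_ext (is_deriveN h2) => [s|]; by rewrite ImN.
Qed.

Lemma CDer_mul phi psi t d e : CDer phi t d -> CDer psi t e ->
  CDer (fun s => phi s * psi s) t (d * psi t + phi t * e).
Proof.
move=> [h1 h2] [h3 h4]; split.
  apply: is_derive_ext (is_deriveB (is_deriveM h1 h3) (is_deriveM h2 h4)) => [s|].
    by rewrite ReM.
  rewrite /GRing.scale /= ReD !ReM; ring.
apply: is_derive_ext (is_deriveD (is_deriveM h1 h4) (is_deriveM h2 h3)) => [s|].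
  by rewrite ImM.
rewrite /GRing.scale /= ImD !ImM; ring.
Qed.


Lemma is_deriveV' (f : R -> R) t d : f t != 0 -> is_derive t (1:R) f d ->
  is_derive t (1:R) (fun s => (f s)^-1) (- (f t) ^- 2 *: d).
Proof. move=> nz [df <-]; split; [exact: derivableV | exact: deriveV]. Qed.

Lemma n2_neq0 (x : R[i]) : x != 0 -> Re x ^+ 2 + Im x ^+ 2 != 0.
Proof.
case: x => a b /= nz; apply/negP; rewrite paddr_eq0 ?sqr_ge0 // !sqrf_eq0.
by case/andP => /eqP a0 /eqP b0; move: nz; rewrite a0 b0 eqxx.
Qed.

Lemma CDer_inv phi t d : phi t != 0 -> CDer phi t d ->
  CDer (fun s => (phi s)^-1) t (- d * (phi t)^-1 * (phi t)^-1).
Proof.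
move=> nz [h1 h2].
have hn := is_deriveD (is_deriveM h1 h1) (is_deriveM h2 h2).
have nz' := n2_neq0 nz.
have nz'' : (Re (phi t) * Re (phi t) + Im (phi t) * Im (phi t)) != 0 by rewrite -!expr2.
have hV := @is_deriveV' (fun s => Re (phi s) * Re (phi s) + Im (phi s) * Im (phi s)) t _ nz'' hn.
split.
  apply: is_derive_ext (is_deriveM h1 hV) => [s|].
    by rewrite ReV /= !expr2.
  rewrite /GRing.scale /= !(ReM, ImM, ReN, ImN, ReV, ImV).
  move: nz''; set a := Re (phi t); set b := Im (phi t) => nz2.
  rewrite /GRing.exp /=. field. exact: nz2.
apply: is_derive_ext (is_deriveM (is_deriveN h2) hV) => [s|].
  by rewrite ImV /= !expr2.
rewrite /GRing.scale /= !(ReM, ImM, ReN, ImN, ReV, ImV).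
move: nz''; set a := Re (phi t); set b := Im (phi t) => nz2.
rewrite /GRing.exp /=. have -> : (- (fun s => Im (phi s))) t = - b by []. field. exact: nz2.
Qed.

Lemma CDer_near phi psi t d : (\forall s \near t, phi s = psi s) ->
  CDer phi t d -> CDer psi t d.
Proof.
move=> H [h1 h2]; split.
  by apply: near_eq_is_derive h1; apply: filterS H => s ->.
by apply: near_eq_is_derive h2; apply: filterS H => s ->.
Qed.

Lemma is_derive_cont (f : R -> R) t d : is_derive t (1:R) f d -> f @ t --> f t.
Proof.
move=> [df _]; apply: differentiable_continuous.
exact/derivable1_diffP.
Qed.

Lemma CDer_neq0_near phi t d : CDer phi t d -> phi t != 0 ->
  \forall s \near t, phi s != 0.
Proof.
move=> [h1 h2] nz.
have [re0|re0] := eqVneq (Re (phi t)) 0.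
  have im0 : Im (phi t) != 0.
    by apply: contra nz; rewrite -(cplxE (phi t)) re0 => /eqP ->.
  apply: filterS (cvgr_neq0 _ (is_derive_cont h2) im0) => s.
  by apply: contra => /eqP ->.
apply: filterS (cvgr_neq0 _ (is_derive_cont h1) re0) => s.
by apply: contra => /eqP ->.
Qed.

End CD.

Section Bridge.
Variable R : realType.
Local Notation Re := (@complex.Re R).
Local Notation Im := (@complex.Im R).

Lemma bridge n p (F : 'M[R]_(n,p) -> R) (Y E : 'M[R]_(n,p)) s d :
  is_derive s (1:R) (fun t => F (t *: E + Y)) d -> is_derive (s *: E + Y) E F d.
Proof.
move=> [df dv].
have eq : (fun h : R => h^-1 *: ((F \o shift (s *: E + Y)) (h *: E) - F (s *: E + Y)))
  = (fun h : R => h^-1 *: (((fun t => F (t *: E + Y)) \o shift s) (h *: (1:R))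
       - (fun t => F (t *: E + Y)) s)).
  apply/funext => h /=; congr (_ *: (F _ - _)).
  by rewrite [h%:A]mulr1 scalerDl addrA.
by split; rewrite /derivable /derive eq; [exact: df | exact: dv].
Qed.

Lemma line_C2 n p (f : 'M[R]_(n,p) -> R[i]) (Y : 'M[R]_(n,p)) a b
  (d1 : R -> R[i]) v2 :
  (\forall s \near (0:R), CDer (fun t => f (t *: delta_mx a b + Y)) s (d1 s)) ->
  CDer d1 0 v2 ->
  [/\ derivable (cRe f) Y (delta_mx a b), derivable (cIm f) Y (delta_mx a b),
      derivable (rpartial a b (cRe f)) Y (delta_mx a b) &
      derivable (rpartial a b (cIm f)) Y (delta_mx a b)] /\
  cpartial a b f Y = d1 0 /\
  cpartial a b (cpartial a b f) Y = v2.
Proof.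
set E := delta_mx a b => H H2.
have key s : CDer (fun t => f (t *: E + Y)) s (d1 s) ->
    [/\ is_derive (s *: E + Y) E (cRe f) (Re (d1 s)),
        is_derive (s *: E + Y) E (cIm f) (Im (d1 s)) &
        cpartial a b f (s *: E + Y) = d1 s].
  move=> [h1 h2]; have b1 := bridge (F:=cRe f) (Y:=Y) (E:=E) h1; have b2 := bridge (F:=cIm f) (Y:=Y) (E:=E) h2.
  split => //; rewrite /cpartial /rpartial.
  by case: b1 => _ ->; case: b2 => _ ->; rewrite cplxE.
have h0 := nbhs_singleton H.
have [k1 k2 k3] := key 0 h0.
rewrite scale0r add0r in k1 k2 k3.
have Hg : \forall s \near (0:R), d1 s = cpartial a b f (s *: E + Y).
  by apply: filterS H => s /key [_ _ ->].
have [g1 g2] := CDer_near Hg H2.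
have l1 := bridge (F:=cRe (cpartial a b f)) (Y:=Y) (E:=E) g1; have l2 := bridge (F:=cIm (cpartial a b f)) (Y:=Y) (E:=E) g2.
rewrite scale0r add0r in l1 l2.
split; [split|split].
- by case: k1.
- by case: k2.
- by case: l1.
- by case: l2.
- exact: k3.
- rewrite /cpartial.
  have -> : rpartial a b (cRe (cpartial a b f)) Y = Re v2 by case: l1.
  have -> : rpartial a b (cIm (cpartial a b f)) Y = Im v2 by case: l2.
  by rewrite cplxE.
Qed.
End Bridge.

Section MxLemmas.
Variable K : fieldType.

Lemma mul_delta_entry m n q s (P : 'M[K]_(m,n)) (Q : 'M[K]_(q,s)) i j x y :
  (P *m delta_mx i j *m Q) x y = P x i * Q j y.
Proof.
rewrite mxE (bigD1 j) //= big1 ?addr0.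
  rewrite mxE (bigD1 i) //= big1 ?addr0; first by rewrite mxE !eqxx mulr1.
  by move=> k nk; rewrite mxE (negbTE nk) mulr0.
move=> k nk; rewrite mxE big1 ?mul0r // => l _.
by rewrite mxE (negbTE nk) andbF mulr0.
Qed.

Lemma delta_sandwich n m (A : 'M[K]_(m, n)) (i : 'I_n) (j : 'I_m) :
  delta_mx i j *m A *m delta_mx i j = A j i *: delta_mx i j.
Proof.
have -> : delta_mx i j *m A *m delta_mx i j =
  1%:M *m delta_mx i j *m (A *m delta_mx i j *m 1%:M).
  by rewrite mul1mx mulmx1 mulmxA.
apply/matrixP => x y; rewrite mul_delta_entry mul_delta_entry !mxE.
by rewrite [j == y]eq_sym; case: (x == i); case: (y == j); rewrite /= ?mulr1 ?mulr0 ?mul0r ?mul1r.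
Qed.

Lemma invmx_eq n (A B : 'M[K]_n) : A *m B = 1%:M -> invmx A = B.
Proof.
move=> H; have [Au _] := mulmx1_unit H.
by rewrite -[invmx A]mulmx1 -H mulmxA (mulVmx Au) mul1mx.
Qed.

Lemma SM_mul n (Z : 'M[K]_n) (w : K) (i j : 'I_n) :
  Z \in unitmx -> 1 + w * invmx Z j i != 0 ->
  (Z + w *: delta_mx i j) *m
  (invmx Z - (w / (1 + w * invmx Z j i)) *: (invmx Z *m delta_mx i j *m invmx Z)) = 1%:M.
Proof.
move=> Zu nz.
set Zi := invmx Z; set E := delta_mx i j; set b := Zi j i.
set g := w / (1 + w * b).
rewrite mulmxDl !mulmxBr -!scalemxAr -!scalemxAl !mulmxA (mulmxV Zu) mul1mx.
rewrite delta_sandwich -/b !scalemxAl !scalerA.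

rewrite -!scalemxAl -/E -scalerBl.
have hc : w - g * w * b = g by rewrite /g; field.
by rewrite hc subrK.
Qed.

Lemma sherman_morrison n (Z : 'M[K]_n) (w : K) (i j : 'I_n) :
  Z \in unitmx -> 1 + w * invmx Z j i != 0 ->
  invmx (Z + w *: delta_mx i j) =
  invmx Z - (w / (1 + w * invmx Z j i)) *: (invmx Z *m delta_mx i j *m invmx Z).
Proof. by move=> Zu nz; apply: invmx_eq; apply: SM_mul. Qed.

Lemma SM_unit n (Z : 'M[K]_n) (w : K) (i j : 'I_n) :
  Z \in unitmx -> 1 + w * invmx Z j i != 0 -> (Z + w *: delta_mx i j) \in unitmx.
Proof. by move=> Zu nz; have [] := mulmx1_unit (SM_mul Zu nz). Qed.

End MxLemmas.

Section Cplx.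
Variable R : realType.
Local Notation Re := (@complex.Re R).
Local Notation Im := (@complex.Im R).

Lemma cplx_lin (t a1 a2 b1 b2 : R) :
  ((t * a1 + a2) +i* (t * b1 + b2)) = t%:C * (a1 +i* b1) + (a2 +i* b2).
Proof. by apply: complex_ext; rewrite !(ReD, ImD, ReM, ImM) /=; ring. Qed.

Lemma cplx_sum (I : Type) (s : seq I) (P : pred I) (F G : I -> R) :
  (\sum_(i <- s | P i) F i) +i* (\sum_(i <- s | P i) G i) =
  \sum_(i <- s | P i) (F i +i* G i).
Proof.
elim/big_rec3: _ => [//|i x y z _ <-].
by [].
Qed.

Lemma cplx_mulC (a b x : R) : (a +i* b) * x%:C = (a * x) +i* (b * x).
Proof. by apply: complex_ext; rewrite !(ReD, ImD, ReM, ImM) /=; ring. Qed.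

Lemma cplx_nat (n : nat) : ((n%:R : R) +i* 0) = n%:R.
Proof. by rewrite complexr0 (rmorph_nat (real_complex R)). Qed.

Lemma cplx_i_nat (n : nat) : (0 +i* (n%:R : R)) = 'i * n%:R.
Proof. by rewrite -cplx_nat; apply: complex_ext; rewrite !(ReD, ImD, ReM, ImM) /=; ring. Qed.

End Cplx.

Section Ext.
Variables (R : realType) (p r : nat).
Local Notation N' := (p + p + r.+1 + r)%N.
Local Notation N := (p + p + r.+1 + r.+1)%N.

Definition ext (Y : 'M[R]_(N', p)) : 'M[R]_(N, p) :=
  \matrix_(i, j) oapp (fun k : 'I_N' => Y k j) 0 (insub (val i)).

Lemma extE Y (i : 'I_N) (k : 'I_N') j : val i = val k -> ext Y i j = Y k j.
Proof.
move=> e; rewrite mxE; have ik : (val i < N')%N by rewrite e ltn_ord.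
by rewrite insubT /=; congr (Y _ j); apply: val_inj.
Qed.

Lemma extE0 Y (i : 'I_N) j : ~~ (val i < N')%N -> ext Y i j = 0.
Proof. by move=> h; rewrite mxE insubF //; apply/negbTE. Qed.

Lemma droplast_ext Y : droplast (ext Y) = Y.
Proof. by apply/matrixP => i j; rewrite mxE (extE _ _ (k := i)). Qed.

Lemma ext_lin Y1 Y2 (t : R) : ext (t *: Y1 + Y2) = t *: ext Y1 + ext Y2.
Proof.
apply/matrixP => i j; rewrite !mxE.
by case: insubP => [k _ _|_] /=; rewrite ?mxE // mulr0 addr0.
Qed.

Lemma ext_delta (a : 'I_N') b (i : 'I_N) j :
  ext (delta_mx a b) i j = ((val i == val a) && (j == b))%:R.
Proof.
rewrite mxE; case: insubP => [k _ ki|ni] /=.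
  by rewrite mxE -ki.
suff -> : (val i == val a) = false by [].
by apply/negbTE; apply: contra ni => /eqP ->; exact: ltn_ord.
Qed.

Lemma blk0E (X : 'M[R]_(N, p)) x y :
  blk0 X x y = X (lshift r.+1 (lshift r.+1 (lshift p x))) y.
Proof. by rewrite !mxE. Qed.
Lemma blk1E (X : 'M[R]_(N, p)) x y :
  blk1 X x y = X (lshift r.+1 (lshift r.+1 (rshift p x))) y.
Proof. by rewrite !mxE. Qed.
Lemma blk2E (X : 'M[R]_(N, p)) x y :
  blk2 X x y = X (lshift r.+1 (rshift (p + p) x)) y.
Proof. by rewrite !mxE. Qed.
Lemma blk3E (X : 'M[R]_(N, p)) x y :
  blk3 X x y = X (rshift (p + p + r.+1) x) y.
Proof. by rewrite !mxE. Qed.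

End Ext.

Ltac natcase := repeat match goal with
  | |- context [(?u == ?v)%N] => case: (@eqP nat u v) => ?
  end; try lia.

Section Blocks.
Variables (R : realType) (p r : nat).
Local Notation N' := (p + p + r.+1 + r)%N.
Local Notation N := (p + p + r.+1 + r.+1)%N.

Lemma cplxE' m n (A B : 'M[R]_(m, n)) x y : cplx A B x y = (A x y +i* B x y).
Proof. by rewrite mxE. Qed.

Lemma cplx_linM m n (A1 A2 B1 B2 : 'M[R]_(m, n)) (t : R) :
  cplx (t *: A1 + A2) (t *: B1 + B2) = t%:C *: cplx A1 B1 + cplx A2 B2.
Proof. by apply/matrixP => x y; rewrite !mxE cplx_lin. Qed.

Lemma blk_lin (X1 X2 : 'M[R]_(N, p)) (t : R) :
  [/\ blk0 (t *: X1 + X2) = t *: blk0 X1 + blk0 X2,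
      blk1 (t *: X1 + X2) = t *: blk1 X1 + blk1 X2,
      blk2 (t *: X1 + X2) = t *: blk2 X1 + blk2 X2 &
      blk3 (t *: X1 + X2) = t *: blk3 X1 + blk3 X2].
Proof. by split; apply/matrixP => x y; rewrite !mxE. Qed.

Lemma Zof_lin (X1 X2 : 'M[R]_(N, p)) (t : R) :
  Zof (t *: X1 + X2) = t%:C *: Zof X1 + Zof X2.
Proof. by have [h0 h1 _ _] := blk_lin X1 X2 t; rewrite /Zof h0 h1 cplx_linM. Qed.

Lemma Wof_lin (X1 X2 : 'M[R]_(N, p)) (t : R) :
  Wof (t *: X1 + X2) = t%:C *: Wof X1 + Wof X2.
Proof. by have [_ _ h2 h3] := blk_lin X1 X2 t; rewrite /Wof h2 h3 cplx_linM. Qed.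

Lemma conjmx_lin m n (A B : 'M[R[i]]_(m, n)) (t : R) :
  Defs.conjmx (t%:C *: A + B) = t%:C *: Defs.conjmx A + Defs.conjmx B.
Proof.
apply/matrixP => x y; rewrite !mxE rmorphD rmorphM /=.
by rewrite oppr0.
Qed.

Lemma delta_case0 (a0 : 'I_p) b :
  Zof (ext (delta_mx (lshift r (lshift r.+1 (lshift p a0))) b : 'M[R]_(N', p))) = delta_mx a0 b /\
  Wof (ext (delta_mx (lshift r (lshift r.+1 (lshift p a0))) b : 'M[R]_(N', p))) = 0.
Proof.
split; apply/matrixP => x y; rewrite cplxE' ?(blk0E, blk1E, blk2E, blk3E) !ext_delta !mxE /=;
  have := ltn_ord x; have := ltn_ord a0; rewrite -?val_eqE /=; natcase; rewrite /= ?andbF ?cplx_nat //.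
Qed.

Lemma delta_case1 (a0 : 'I_p) b :
  Zof (ext (delta_mx (lshift r (lshift r.+1 (rshift p a0))) b : 'M[R]_(N', p))) = 'i *: delta_mx a0 b /\
  Wof (ext (delta_mx (lshift r (lshift r.+1 (rshift p a0))) b : 'M[R]_(N', p))) = 0.
Proof.
split; apply/matrixP => x y; rewrite cplxE' ?(blk0E, blk1E, blk2E, blk3E) !ext_delta !mxE /=;
  have := ltn_ord x; have := ltn_ord a0; rewrite -?val_eqE /=; natcase;
  rewrite /= ?andbF ?mulr0n ?mulr0 ?cplx_nat ?cplx_i_nat //.
Qed.

Lemma delta_case2 (l : 'I_r.+1) b :
  Zof (ext (delta_mx (lshift r (rshift (p + p) l)) b : 'M[R]_(N', p))) = 0 /\
  Wof (ext (delta_mx (lshift r (rshift (p + p) l)) b : 'M[R]_(N', p))) = delta_mx l b.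
Proof.
split; apply/matrixP => x y; rewrite cplxE' ?(blk0E, blk1E, blk2E, blk3E) !ext_delta !mxE /=;
  have := ltn_ord x; have := ltn_ord l; rewrite -?val_eqE /=; natcase;
  rewrite /= ?andbF ?mulr0n ?mulr0 ?cplx_nat ?cplx_i_nat //.
Qed.

Lemma delta_case3 (l : 'I_r) b :
  Zof (ext (delta_mx (rshift (p + p + r.+1) l) b : 'M[R]_(N', p))) = 0 /\
  Wof (ext (delta_mx (rshift (p + p + r.+1) l) b : 'M[R]_(N', p))) =
    'i *: delta_mx (widen_ord (leqnSn r) l) b.
Proof.
split; apply/matrixP => x y; rewrite cplxE' ?(blk0E, blk1E, blk2E, blk3E) !ext_delta !mxE /=;
  have := ltn_ord x; have := ltn_ord l; rewrite -?val_eqE /=; natcase;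
  rewrite /= ?andbF ?mulr0n ?mulr0 ?cplx_nat ?cplx_i_nat //.
Qed.

End Blocks.

Section Dom.
Variables (R : realType) (p r : nat).
Local Notation N' := (p + p + r.+1 + r)%N.
Local Notation N := (p + p + r.+1 + r.+1)%N.

Lemma inU_of_Z (X : 'M[R]_(N, p)) : \det (Zof X) != 0 -> inU X.
Proof.
move=> hZ; rewrite /inU -row_free_unit; apply: inj_row_free => v H.
set w := X *m v^T.
have w0 : forall i, w i 0 = 0.
  have S0 : w^T *m w = 0.
    by rewrite /w trmx_mul trmxK !mulmxA -(mulmxA v) H mul0mx.
  have : \sum_i w i 0 * w i 0 = 0.
    move/matrixP: S0 => /(_ 0 0); rewrite !mxE => h; rewrite -[RHS]h; apply: eq_bigr => i _; by rewrite !mxE.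
  have nn : forall i, true -> 0 <= w i 0 * w i 0 by move=> i _; rewrite -expr2 sqr_ge0.
  move/psumr_eq0P => h i; have /eqP := h nn i isT.
  by rewrite mulf_eq0 orbb => /eqP.
set vC := map_mx (real_complex R) v^T.
have ZvC : Zof X *m vC = 0.
  apply/matrixP => i j; rewrite (ord1 j) !mxE.
  have -> : \sum_k Zof X i k * vC k 0 =
    \sum_k ((blk0 X i k * v^T k 0) +i* (blk1 X i k * v^T k 0)).
    by apply: eq_bigr => k _; rewrite !mxE cplx_mulC.
  rewrite -cplx_sum.
  have h0 := w0 (lshift r.+1 (lshift r.+1 (lshift p i))).
  have h1 := w0 (lshift r.+1 (lshift r.+1 (rshift p i))).
  rewrite !mxE in h0 h1.
  have -> : \sum_k blk0 X i k * v^T k 0 = 0.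
    by rewrite -[RHS]h0; apply: eq_bigr => k _; rewrite blk0E.
  have -> : \sum_k blk1 X i k * v^T k 0 = 0.
    by rewrite -[RHS]h1; apply: eq_bigr => k _; rewrite blk1E.
  by [].
have Zu : Zof X \in unitmx by rewrite unitmxE unitfE.
have vC0 : vC = 0 by rewrite -[vC]mul1mx -(mulVmx Zu) -mulmxA ZvC mulmx0.
apply/matrixP => i j; rewrite (ord1 i).
move/matrixP: vC0 => /(_ j 0); rewrite !mxE.
by case.
Qed.

Lemma ext_droplast_lt (X : 'M[R]_(N, p)) (i : 'I_N) j : (val i < N')%N ->
  ext (droplast X) i j = X i j.
Proof.
move=> h; rewrite (extE _ _ (k := Ordinal h)) // mxE.
by congr (X _ j); apply: val_inj.
Qed.

Lemma Zof_ext_droplast (X : 'M[R]_(N, p)) : Zof (ext (droplast X)) = Zof X.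
Proof.
apply/matrixP => x y; rewrite !cplxE' !blk0E !blk1E !ext_droplast_lt //=;
  have := ltn_ord x; lia.
Qed.

Definition Dom (Y : 'M[R]_(N', p)) := \det (Zof (ext Y)) != 0.

Lemma inV'_Dom Y : inV' Y -> Dom Y.
Proof. by case=> X [[_ hz] <-]; rewrite /Dom Zof_ext_droplast. Qed.

Lemma Dom_inV Y : Dom Y -> inV (ext Y).
Proof. by move=> d; split => //; exact: inU_of_Z. Qed.

Lemma Phi_ext (M : 'M[R[i]]_r.+1) (Phi : 'M[R]_(N', p) -> 'M[R[i]]_(r, p))
  (hPhi : forall X, inV X -> Phi (droplast X) = hatPhi M X) Y :
  Dom Y -> Phi Y = hatPhi M (ext Y).
Proof. by move=> d; rewrite -hPhi ?droplast_ext //; exact: Dom_inV. Qed.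

End Dom.

Section Smx.
Variables (R : realType) (p r : nat).
Local Notation N' := (p + p + r.+1 + r)%N.
Local Notation N := (p + p + r.+1 + r.+1)%N.
Local Notation wd := (widen_ord (leqnSn r)).
Local Notation Re := (@complex.Re R).
Local Notation Im := (@complex.Im R).

Lemma ReJ (z : R[i]) : Re (z^*)%C = Re z. Proof. by case: z. Qed.
Lemma ImJ (z : R[i]) : Im (z^*)%C = - Im z. Proof. by case: z. Qed.

Lemma skewE (M : 'M[R[i]]_r.+1) : skew_cplx M -> forall x y, M x y = - M y x.
Proof. by move=> hM x y; move/matrixP: hM => /(_ y x); rewrite !mxE => ->. Qed.

Lemma skew_diag (M : 'M[R[i]]_r.+1) : skew_cplx M -> forall x, M x x = 0.
Proof.
move=> hM x; have h := skewE hM x x.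
have : 2%:R * M x x = 0 by rewrite mulr2n mulrDl mul1r {1}h addNr.
by move/eqP; rewrite mulf_eq0 pnatr_eq0 /= => /eqP.
Qed.

Lemma Smx_w (M : 'M[R[i]]_r.+1) (j l : 'I_r) : Smx M j (wd l) = (l == j)%:R.
Proof.
rewrite mxE /= -val_eqE /=.
case: eqP => [//|_]; have := ltn_ord l; case: eqP => //= ->; lia.
Qed.

Lemma Smx_max (M : 'M[R[i]]_r.+1) (j : 'I_r) : Smx M j ord_max = M (wd j) ord_max.
Proof.
rewrite mxE /=; have := ltn_ord j; case: eqP => [/= h|_ _]; first lia.
by rewrite eqxx; congr (M _ _); apply: val_inj.
Qed.

Lemma SM_entry (M : 'M[R[i]]_r.+1) (j : 'I_r) l :
  (Smx M *m M) j l = M (wd j) l + M (wd j) ord_max * M ord_max l.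
Proof.
rewrite mxE big_ord_recr /= Smx_max; congr (_ + _).
rewrite (bigD1 j) //= big1 ?addr0; first by rewrite Smx_w eqxx mul1r.
by move=> k nk; rewrite Smx_w (negbTE nk) mul0r.
Qed.

Lemma hatPhi_indep (M : 'M[R[i]]_r.+1) (hM : skew_cplx M) (X X' : 'M[R]_(N, p)) :
  droplast X = droplast X' -> hatPhi M X = hatPhi M X'.
Proof.
move=> dX.
have eqX : forall (i : 'I_N) k, (val i < N')%N -> X i k = X' i k.
  by move=> i k h; rewrite -(ext_droplast_lt X k h) -(ext_droplast_lt X' k h) dX.
have hZ : Zof X = Zof X' by rewrite -Zof_ext_droplast dX Zof_ext_droplast.
set D := Wof X - Wof X'.
have hD : forall (l : 'I_r) k, D (wd l) k = 0.
  move=> l k; rewrite !mxE !eqX ?subrr //= ; have := ltn_ord l; lia.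
have hcD : Defs.conjmx D = - D.
  apply/matrixP => l k; rewrite !mxE eqX /=; last by have := ltn_ord l; lia.
  by apply: complex_ext; rewrite ?(ReD, ImD, ReN, ImN, ReJ, ImJ) /=; ring.
rewrite /hatPhi hZ; congr (_ *m _); apply/eqP; rewrite -subr_eq0 -mulmxBr.
have -> : Wof X + M *m Defs.conjmx (Wof X) - (Wof X' + M *m Defs.conjmx (Wof X')) =
    D - M *m D.
  rewrite -mulmxN -hcD opprD addrACA -mulmxBr; congr (_ + (M *m _)); rewrite /D.
  by apply/matrixP => l k; rewrite !mxE rmorphB.
rewrite mulmxBr mulmxA -mulmxBl; apply/eqP/matrixP => j k; rewrite !mxE.
rewrite big_ord_recr /= big1 ?add0r => [|l _]; last by rewrite hD mulr0.
rewrite [(Smx M - _) _ _]mxE [(- (Smx M *m M)) _ _]mxE Smx_max SM_entry skew_diag // mulr0 addr0 subrr mul0r.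
by [].
Qed.

End Smx.

Section Line.
Variables (R : realType) (p r : nat) (M : 'M[R[i]]_r.+1).
Local Notation N' := (p + p + r.+1 + r)%N.
Local Notation N := (p + p + r.+1 + r.+1)%N.
Variable Y : 'M[R]_(N', p).
Local Notation X := (ext Y).
Local Notation Z := (Zof X).
Local Notation W := (Wof X).
Local Notation Zi := (invmx Z).
Local Notation S := (Smx M).
Local Notation G := (hatPhi M X).

Lemma line_W (E : 'M[R]_(N', p)) (WE : 'M[R[i]]_(r.+1, p)) :
  Zof (ext E) = 0 -> Wof (ext E) = WE -> forall t : R,
  hatPhi M (ext (t *: E + Y)) =
    G + t%:C *: (S *m (WE + M *m Defs.conjmx WE) *m Zi).
Proof.
move=> hZ hW t; rewrite /hatPhi ext_lin Zof_lin Wof_lin hZ hW scaler0 add0r conjmx_lin.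
rewrite !mulmxDr !mulmxDl -!scalemxAr -!scalemxAl.
by rewrite addrACA addrC; congr (_ + _); rewrite scalerDr.
Qed.
Lemma line_Z (E : 'M[R]_(N', p)) (c : R[i]) (a0 b : 'I_p) :
  Zof (ext E) = c *: delta_mx a0 b -> Wof (ext E) = 0 -> Z \in unitmx -> forall t : R,
  1 + t%:C * (c * Zi b a0) != 0 ->
  hatPhi M (ext (t *: E + Y)) =
    G - (t%:C * c / (1 + t%:C * (c * Zi b a0))) *: (G *m delta_mx a0 b *m Zi)
  /\ Dom (t *: E + Y).
Proof.
move=> hZ hW Zu t nz.
have eZ : Zof (ext (t *: E + Y)) = Z + (t%:C * c) *: delta_mx a0 b.
  by rewrite ext_lin Zof_lin hZ scalerA addrC.
have eW : Wof (ext (t *: E + Y)) = W by rewrite ext_lin Wof_lin hW scaler0 add0r.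
have nz' : 1 + t%:C * c * Zi b a0 != 0 by rewrite -mulrA.
split.
  rewrite /hatPhi eZ eW sherman_morrison // mulmxBr -!scalemxAr !mulmxA !mulrA.
  by [].
by rewrite /Dom eZ -unitfE -unitmxE; exact: SM_unit.
Qed.

End Line.

Section ScalarZ.
Variables (R : realType) (c b Q P : R[i]).

Definition uf (t : R) := 1 + t%:C * (c * b).
Definition hf (t : R) := P - t%:C * c / uf t * Q.
Definition d1f (s : R) := - (c * Q) * ((uf s)^-1 * (uf s)^-1).

Lemma CDer_uf s : CDer uf s (c * b).
Proof. exact: CDer_eq (add0r _) (CDer_add (CDer_cst 1 s) (CDer_lin (c * b) s)). Qed.

Lemma uf0 : uf 0 = 1.
Proof. by rewrite /uf rmorph0 mul0r addr0. Qed.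

Lemma CDer_hf s : uf s != 0 -> CDer hf s (d1f s).
Proof.
move=> us.
have h2 := CDer_inv us (CDer_uf s).
have h3 := CDer_mul (CDer_lin c s) h2.
have h4 := CDer_mul h3 (CDer_cst Q s).
have h5 := CDer_add (CDer_cst P s) (CDer_opp h4).
apply: CDer_eq h5; rewrite /d1f.
move: us; rewrite /uf => us; field; exact: us.
Qed.

Lemma uf_near : \forall s \near (0:R), uf s != 0.
Proof. by apply: (CDer_neq0_near (CDer_uf 0)); rewrite uf0 oner_neq0. Qed.

Lemma CDer_d1f : CDer d1f 0 (2%:R * c ^+ 2 * b * Q).
Proof.
have u0 : uf 0 != 0 by rewrite uf0 oner_neq0.
have hi := CDer_inv u0 (CDer_uf 0).
have h := CDer_mul (CDer_cst (- (c * Q)) 0) (CDer_mul hi hi).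
apply: CDer_eq h; rewrite uf0 invr1 !mulr1; ring.
Qed.

End ScalarZ.

Section Cases.
Variables (R : realType) (p r : nat) (M : 'M[R[i]]_r.+1).
Local Notation N' := (p + p + r.+1 + r)%N.
Local Notation N := (p + p + r.+1 + r.+1)%N.
Variable Phi : 'M[R]_(N', p) -> 'M[R[i]]_(r, p).
Hypothesis hPhi : forall X, inV X -> Phi (droplast X) = hatPhi M X.
Variable Y : 'M[R]_(N', p).
Hypothesis hY : Dom Y.
Local Notation X := (ext Y).
Local Notation Z := (Zof X).
Local Notation W := (Wof X).
Local Notation Zi := (invmx Z).
Local Notation S := (Smx M).
Local Notation G := (hatPhi M X).

Definition C2ab n q (f : 'M[R]_(n, q) -> R[i]) Y' a b :=
  [/\ derivable (cRe f) Y' (delta_mx a b), derivable (cIm f) Y' (delta_mx a b),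
      derivable (rpartial a b (cRe f)) Y' (delta_mx a b) &
      derivable (rpartial a b (cIm f)) Y' (delta_mx a b)].

Lemma entrySM (A : 'M[R[i]]_(r, p)) (g : R[i]) (a0 b : 'I_p) (B : 'M[R[i]]_p) j k :
  (A - g *: (A *m delta_mx a0 b *m B)) j k = A j k - g * (A j a0 * B b k).
Proof. by rewrite [LHS]mxE; congr (_ + _); rewrite mxE mxE mul_delta_entry. Qed.

Lemma caseZ (a : 'I_N') (a0 b : 'I_p) (c : R[i]) j k :
  Zof (ext (delta_mx a b : 'M[R]_(N', p))) = c *: delta_mx a0 b ->
  Wof (ext (delta_mx a b : 'M[R]_(N', p))) = 0 ->
  C2ab (fun Y' => Phi Y' j k) Y a b /\
  cpartial a b (fun Y' => Phi Y' j k) Y = - (c * (G j a0 * Zi b k)) /\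
  cpartial a b (cpartial a b (fun Y' => Phi Y' j k)) Y =
    2%:R * c ^+ 2 * Zi b a0 * (G j a0 * Zi b k).
Proof.
move=> hZ hW.
have Zu : Z \in unitmx by rewrite unitmxE unitfE.
have Hn : \forall s \near (0:R), CDer (fun t => Phi (t *: delta_mx a b + Y) j k) s
    (d1f c (Zi b a0) (G j a0 * Zi b k) s).
  apply: filterS (uf_near c (Zi b a0)) => s us.
  apply: CDer_near (CDer_hf (G j a0 * Zi b k) (G j k) us).
  apply: filterS (CDer_neq0_near (CDer_uf c (Zi b a0) s) us) => t ut.
  have [eq dom] := line_Z M hZ hW Zu ut.
  by rewrite (Phi_ext hPhi) // eq entrySM /hf /uf.
have [H1 [H2 H3]] := line_C2 (f := fun Y' => Phi Y' j k) (Y := Y) (a := a) (b := b) Hn (CDer_d1f _ _ _).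
split => //; split => //.
by rewrite H2 /d1f uf0 invr1 !mulr1.
Qed.

Lemma caseW (a : 'I_N') (b : 'I_p) (WE : 'M[R[i]]_(r.+1, p)) j k :
  Zof (ext (delta_mx a b : 'M[R]_(N', p))) = 0 ->
  Wof (ext (delta_mx a b : 'M[R]_(N', p))) = WE ->
  C2ab (fun Y' => Phi Y' j k) Y a b /\
  cpartial a b (fun Y' => Phi Y' j k) Y = (S *m (WE + M *m Defs.conjmx WE) *m Zi) j k /\
  cpartial a b (cpartial a b (fun Y' => Phi Y' j k)) Y = 0.
Proof.
move=> hZ hW.
set V := (S *m (WE + M *m Defs.conjmx WE) *m Zi) j k.
have Hn : \forall s \near (0:R), CDer (fun t => Phi (t *: delta_mx a b + Y) j k) s V.
  apply: filterS filterT => s _.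
  have e : (fun t => Phi (t *: delta_mx a b + Y) j k) = (fun t => G j k + t%:C * V).
    apply/funext => t.
    have dom : Dom (t *: delta_mx a b + Y).
      by rewrite /Dom ext_lin Zof_lin hZ scaler0 add0r.
    by rewrite (Phi_ext hPhi) // (line_W M Y hZ hW) [LHS]mxE; congr (_ + _); rewrite mxE.
  rewrite e; exact: CDer_eq (add0r V) (CDer_add (CDer_cst _ s) (CDer_lin V s)).
have [H1 [H2 H3]] := line_C2 (f := fun Y' => Phi Y' j k) (Y := Y) (a := a) (b := b) (d1 := fun _ => V) Hn (CDer_cst V 0).
by split.
Qed.

End Cases.

Lemma iiE (R : realType) (x y : R[i]) : ('i * x) * ('i * y) = - (x * y).
Proof. by rewrite mulrACA -expr2 sqr_i mulN1r. Qed.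

Section Sums.
Variables (R : realType) (p r : nat) (M : 'M[R[i]]_r.+1).
Hypothesis hM : skew_cplx M.
Local Notation N' := (p + p + r.+1 + r)%N.
Local Notation N := (p + p + r.+1 + r.+1)%N.
Local Notation wd := (widen_ord (leqnSn r)).
Variable Phi : 'M[R]_(N', p) -> 'M[R[i]]_(r, p).
Hypothesis hPhi : forall X, inV X -> Phi (droplast X) = hatPhi M X.
Variable Y : 'M[R]_(N', p).
Hypothesis hY : Dom Y.
Local Notation X := (ext Y).
Local Notation Z := (Zof X).
Local Notation Zi := (invmx Z).
Local Notation S := (Smx M).
Local Notation G := (hatPhi M X).
Local Notation phi j k := (fun Y' : 'M[R]_(N', p) => Phi Y' j k).

Definition i0 (a0 : 'I_p) : 'I_N' := lshift r (lshift r.+1 (lshift p a0)).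
Definition i1 (a0 : 'I_p) : 'I_N' := lshift r (lshift r.+1 (rshift p a0)).
Definition i2 (l : 'I_r.+1) : 'I_N' := lshift r (rshift (p + p) l).
Definition i3 (l : 'I_r) : 'I_N' := rshift (p + p + r.+1) l.

Lemma cv0 a0 b j k :
  C2ab (phi j k) Y (i0 a0) b /\
  cpartial (i0 a0) b (phi j k) Y = - (G j a0 * Zi b k) /\
  cpartial (i0 a0) b (cpartial (i0 a0) b (phi j k)) Y = 2%:R * Zi b a0 * (G j a0 * Zi b k).
Proof.
have [h1 h2] := delta_case0 R r a0 b.
have h1' : Zof (ext (delta_mx (i0 a0) b : 'M[R]_(N', p))) = 1 *: delta_mx a0 b.
  by rewrite scale1r.
have [H1 [H2 H3]] := caseZ hPhi hY j k h1' h2.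
by rewrite H2 H3 mul1r expr1n mulr1.
Qed.

Lemma cv1 a0 b j k :
  C2ab (phi j k) Y (i1 a0) b /\
  cpartial (i1 a0) b (phi j k) Y = - ('i * (G j a0 * Zi b k)) /\
  cpartial (i1 a0) b (cpartial (i1 a0) b (phi j k)) Y = - (2%:R * Zi b a0 * (G j a0 * Zi b k)).
Proof.
have [h1 h2] := delta_case1 R r a0 b.
have [H1 [H2 H3]] := caseZ hPhi hY j k h1 h2.
by rewrite H2 H3 sqr_i mulrN1 !mulNr.
Qed.

Lemma conj_delta m n (a : 'I_m) (b : 'I_n) :
  Defs.conjmx (delta_mx a b : 'M[R[i]]_(m, n)) = delta_mx a b.
Proof. by apply/matrixP => x y; rewrite !mxE conjc_nat. Qed.

Lemma conj_idelta m n (a : 'I_m) (b : 'I_n) :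
  Defs.conjmx ('i *: delta_mx a b : 'M[R[i]]_(m, n)) = - ('i *: delta_mx a b).
Proof.
apply/matrixP => x y; rewrite !mxE rmorphM /= conjc_nat.
by apply: complex_ext; rewrite ?(ReD, ImD, ReM, ImM, ReN, ImN) /=; ring.
Qed.

Lemma cv2 l b j k :
  C2ab (phi j k) Y (i2 l) b /\
  cpartial (i2 l) b (phi j k) Y = (S + S *m M) j l * Zi b k /\
  cpartial (i2 l) b (cpartial (i2 l) b (phi j k)) Y = 0.
Proof.
have [h1 h2] := delta_case2 R l b.
have [H1 [H2 H3]] := caseW hPhi hY j k h1 h2.
split => //; split => //; rewrite H2 conj_delta.
by rewrite mulmxDr mulmxA -mulmxDl mul_delta_entry.
Qed.

Lemma cv3 l b j k :
  C2ab (phi j k) Y (i3 l) b /\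
  cpartial (i3 l) b (phi j k) Y = 'i * ((S - S *m M) j (wd l) * Zi b k) /\
  cpartial (i3 l) b (cpartial (i3 l) b (phi j k)) Y = 0.
Proof.
have [h1 h2] := delta_case3 R l b.
have [H1 [H2 H3]] := caseW hPhi hY j k h1 h2.
split => //; split => //; rewrite H2 conj_idelta.
have -> : S *m ('i *: delta_mx (wd l) b + M *m - ('i *: delta_mx (wd l) b)) =
    'i *: ((S - S *m M) *m delta_mx (wd l) b).
  by rewrite mulmxN -scalemxAr -scalerBr -scalemxAr mulmxBr mulmxA mulmxBl.
by rewrite -scalemxAl [LHS]mxE mul_delta_entry.

Qed.

End Sums.

Section Final.
Variables (R : realType) (p r : nat) (M : 'M[R[i]]_r.+1).
Hypothesis hM : skew_cplx M.
Local Notation N' := (p + p + r.+1 + r)%N.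
Local Notation N := (p + p + r.+1 + r.+1)%N.
Local Notation wd := (widen_ord (leqnSn r)).
Local Notation S := (Smx M).
Local Notation T := (Smx M *m M).

Lemma kappa_id (j j' : 'I_r) :
  \sum_(l < r.+1) (S + T) j l * (S + T) j' l =
  \sum_(l < r) (S - T) j (wd l) * (S - T) j' (wd l).
Proof.
have ep : forall x y, (S + T) x y = S x y + T x y by move=> x y; rewrite [LHS]mxE.
have em : forall x y, (S - T) x y = S x y - T x y.
  by move=> x y; rewrite [LHS]mxE [(- T) _ _]mxE.
rewrite big_ord_recr /=.
have eL : forall l : 'I_r, (S + T) j (wd l) * (S + T) j' (wd l) =
   (S - T) j (wd l) * (S - T) j' (wd l) +
   2%:R * ((l == j)%:R * T j' (wd l) + T j (wd l) * (l == j')%:R).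
  by move=> l; rewrite !ep !em !Smx_w; ring.
rewrite (eq_bigr _ (fun l _ => eL l)) big_split /= -mulr_sumr big_split /=.
have s1 : \sum_(l < r) (l == j)%:R * T j' (wd l) = T j' (wd j).
  rewrite (bigD1 j) //= big1 ?addr0 ?eqxx ?mul1r // => l nl.
  by rewrite (negbTE nl) mul0r.
have s2 : \sum_(l < r) T j (wd l) * (l == j')%:R = T j (wd j').
  rewrite (bigD1 j') //= big1 ?addr0 ?eqxx ?mulr1 // => l nl.
  by rewrite (negbTE nl) mulr0.
rewrite s1 s2 !ep !Smx_max !SM_entry (skew_diag hM) (skewE hM ord_max (wd j))
  (skewE hM ord_max (wd j')) (skewE hM (wd j') (wd j)).
rewrite -[RHS]addr0 -addrA; congr (_ + _); ring.
Qed.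

Variable Phi : 'M[R]_(N', p) -> 'M[R[i]]_(r, p).
Hypothesis hPhi : forall X, inV X -> Phi (droplast X) = hatPhi M X.
Variable Y : 'M[R]_(N', p).
Hypothesis hY : Dom Y.
Local Notation phi j k := (fun Y' : 'M[R]_(N', p) => Phi Y' j k).
Local Notation Zi := (invmx (Zof (ext Y))).

Lemma C2_phi j k : C2_at (phi j k) Y.
Proof.
move=> a b.
case: (split_ordP a) => [a1 ->|l ->]; last exact: (cv3 hPhi hY l b j k).1.
case: (split_ordP a1) => [a2 ->|l ->]; last exact: (cv2 hPhi hY l b j k).1.
case: (split_ordP a2) => [a0 ->|a0 ->].
  exact: (cv0 hPhi hY a0 b j k).1.
exact: (cv1 hPhi hY a0 b j k).1.
Qed.

Lemma tau_phi j k : tau (phi j k) Y = 0.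
Proof.
rewrite /tau !big_split_ord /=.
rewrite [X in _ + X]big1; last first.
  move=> l _; apply: big1 => b _; exact: (cv3 hPhi hY l b j k).2.2.
rewrite addr0 [X in _ + X]big1; last first.
  move=> l _; apply: big1 => b _; exact: (cv2 hPhi hY l b j k).2.2.
rewrite !addr0 -big_split; apply: big1 => a0 _; rewrite -big_split; apply: big1 => b _.
have h0 := (cv0 hPhi hY a0 b j k).2.2.
have h1 := (cv1 hPhi hY a0 b j k).2.2.
rewrite /i0 /i1 in h0 h1.
rewrite h0 h1; exact: subrr.
Qed.

Lemma kappa_phi j k j' k' : kappa (phi j k) (phi j' k') Y = 0.
Proof.
rewrite /kappa !big_split_ord /= -addrA.
rewrite -[X in X + _]big_split [X in X + _]big1; last first.
  move=> a0 _; rewrite -big_split; apply: big1 => b _.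
  have h0 := (cv0 hPhi hY a0 b j k).2.1; have h0' := (cv0 hPhi hY a0 b j' k').2.1.
  have h1 := (cv1 hPhi hY a0 b j k).2.1; have h1' := (cv1 hPhi hY a0 b j' k').2.1.
  rewrite /i0 /i1 in h0 h0' h1 h1'.
  rewrite h0 h0' h1 h1' !mulrNN iiE; exact: subrr.
rewrite add0r exchange_big [X in _ + X]exchange_big -big_split; apply: big1 => b _ /=.
have e2 : forall l, cpartial (lshift r (rshift (p + p) l)) b (phi j k) Y *
                  cpartial (lshift r (rshift (p + p) l)) b (phi j' k') Y =
   (Zi b k * Zi b k') * ((S + T) j l * (S + T) j' l).
  move=> l; have h := (cv2 hPhi hY l b j k).2.1; have h' := (cv2 hPhi hY l b j' k').2.1.
  rewrite /i2 in h h'; rewrite h h'; ring.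
have e3 : forall l, cpartial (rshift (p + p + r.+1) l) b (phi j k) Y *
                  cpartial (rshift (p + p + r.+1) l) b (phi j' k') Y =
   (Zi b k * Zi b k') * - ((S - T) j (wd l) * (S - T) j' (wd l)).
  move=> l; have h := (cv3 hPhi hY l b j k).2.1; have h' := (cv3 hPhi hY l b j' k').2.1.
  rewrite /i3 in h h'; rewrite h h' iiE; ring.
rewrite (eq_bigr _ (fun l _ => e2 l)) (eq_bigr _ (fun l _ => e3 l)) -!mulr_sumr sumrN kappa_id mulrN.
exact: subrr.
Qed.

End Final.

Section GL.
Variables (R : realType) (p r : nat) (M : 'M[R[i]]_r.+1).
Local Notation N' := (p + p + r.+1 + r)%N.
Local Notation N := (p + p + r.+1 + r.+1)%N.
Local Notation gC g := (map_mx (real_complex R) g).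

Lemma Zof_mul (X : 'M[R]_(N, p)) (g : 'M[R]_p) : Zof (X *m g) = Zof X *m gC g.
Proof.
apply/matrixP => x y; rewrite !mxE cplx_sum; apply: eq_bigr => k _.
by rewrite !mxE cplx_mulC.
Qed.

Lemma Wof_mul (X : 'M[R]_(N, p)) (g : 'M[R]_p) : Wof (X *m g) = Wof X *m gC g.
Proof.
apply/matrixP => x y; rewrite !mxE cplx_sum; apply: eq_bigr => k _.
by rewrite !mxE cplx_mulC.
Qed.

Lemma conj_mul m (A : 'M[R[i]]_(m, p)) (g : 'M[R]_p) :
  Defs.conjmx (A *m gC g) = Defs.conjmx A *m gC g.
Proof.
apply/matrixP => x y; rewrite !mxE rmorph_sum; apply: eq_bigr => k _.
by rewrite rmorphM !mxE; congr (_ * _); rewrite /= oppr0.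
Qed.

Lemma gC_unit (g : 'M[R]_p) : g \in unitmx -> gC g \in unitmx.
Proof. by rewrite map_unitmx. Qed.

Lemma inV_mul (X : 'M[R]_(N, p)) (g : 'M[R]_p) :
  inV X -> g \in unitmx -> inV (X *m g).
Proof.
move=> [hU hZ] gu; split.
  by rewrite /inU trmx_mul -mulmxA (mulmxA X^T) !unitmx_mul unitmx_tr gu hU.
rewrite Zof_mul det_mulmx mulf_neq0 // det_map_mx.
have : \det g != 0 by rewrite -unitfE -unitmxE.
by apply: contra => /eqP [/eqP].
Qed.

Lemma hatPhi_mul (X : 'M[R]_(N, p)) (g : 'M[R]_p) :
  inV X -> g \in unitmx -> hatPhi M (X *m g) = hatPhi M X.
Proof.
move=> [hU hZ] gu.
have Zu : Zof X \in unitmx by rewrite unitmxE unitfE.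
have gCu := gC_unit gu.
rewrite /hatPhi Zof_mul Wof_mul conj_mul.
rewrite (@invmx_eq _ _ _ (invmx (gC g) *m invmx (Zof X))); last first.
  by rewrite mulmxA -(mulmxA (Zof X)) (mulmxV gCu) mulmx1 (mulmxV Zu).
rewrite mulmxA -mulmxDl !mulmxA -(mulmxA _ (gC g)) (mulmxV gCu) mulmx1.
by [].
Qed.

Lemma droplast_mul (X : 'M[R]_(N, p)) (g : 'M[R]_p) :
  droplast (X *m g) = droplast X *m g.
Proof.
by apply/matrixP => a b; rewrite !mxE; apply: eq_bigr => k _; rewrite mxE.
Qed.

End GL.

Unset Implicit Arguments.
Local Close Scope classical_set_scope.
Local Close Scope complex_scope.

Theorem proposition9p3 (R : realType) (p r : nat) (hp : (0 < p)%N)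
  (hr : (2 <= r)%N) (M : 'M[R[i]]_r) (hM : skew_cplx M) :
  (forall X X' : 'M[R]_(p + p + r + r, p),
      inV X -> inV X' -> droplast X = droplast X' ->
      hatPhi M X = hatPhi M X') /\
  (forall Phi : 'M[R]_(p + p + r + r.-1, p) -> 'M[R[i]]_(r.-1, p),
      (forall X, inV X -> Phi (droplast X) = hatPhi M X) ->
      orthogonal_harmonic_family
        (fun jk : 'I_r.-1 * 'I_p => fun Y => Phi Y jk.1 jk.2) (@inV' R p r) /\
      (forall (j : 'I_r.-1) (k : 'I_p),
          GL_invariant (fun Y => Phi Y j k) (@inV' R p r))).
Proof.
case: r hr M hM => [//|r] hr M hM.
split.
  move=> X X' _ _ dX. exact: (@hatPhi_indep R p r M hM X X' dX).
move=> Phi hPhi; split.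
  move=> Y hY'; have hY := inV'_Dom hY'; split.
    by move=> [j k]; split; [exact: (C2_phi hPhi hY j k) | exact: (tau_phi hPhi hY j k)].
  by move=> [j k] [j' k']; exact: (kappa_phi hM hPhi hY j k j' k').
move=> j k Y g hY' gu; case: hY' => X [hX <-] /=.
rewrite -droplast_mul !hPhi //; [by rewrite (hatPhi_mul M hX gu) | exact: (inV_mul hX gu)].
Qed.
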